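(* For every fixed integer $l \ge 2$ there is a constant $c$ depending only on $l$ such that, for all integers $q$ large enough and all $n > c q^2$, AME states of defect $l$ in $(\mathbb{C}^q)^{\otimes n}$ do not exist.
   Context: A pure state $|\psi\rangle \in (\mathbb{C}^q)^{\otimes n}$ is called $k$-uniform if, with $\rho = |\psi\rangle\langle\psi|$, for every subset $S \subseteq \{1,\dots,n\}$ with $|S| = k$ the reduced state of $\rho$ on the parties in $S$ equals $I/q^k$, where $I$ is the identity on $(\mathbb{C}^q)^{\otimes k}$. For an integer $l \ge 0$, an AME state of defect $l$ in $(\mathbb{C}^q)^{\otimes n}$ is a $(\lfloor n/2\rfloor - l)$-uniform state in $(\mathbb{C}^q)^{\otimes n}$. *)

(* Defs.v *)
From mathcomp Require Import all_boot all_order all_algebra.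
From mathcomp Require Import complex.
From mathcomp Require Import Rstruct.
Set Implicit Arguments. Unset Strict Implicit. Unset Printing Implicit Defensive.
Import Order.TTheory GRing.Theory Num.Theory.
Local Open Scope ring_scope.

Definition CC : numClosedFieldType := complex Rdefinitions.R.

(* Computational basis of (C^q)^{\otimes n}: words x : 'I_n -> 'I_q.
   A vector psi in (C^q)^{\otimes n} is its coordinate function. *)
Definition basis_idx (q n : nat) := {ffun 'I_n -> 'I_q}.
Definition qvec (q n : nat) := basis_idx q n -> CC.

Definition unit_vec (q n : nat) (psi : qvec q n) : Prop :=
  \sum_(x : basis_idx q n) psi x * (psi x)^* = 1.

(* Matrix entry <a_S| Tr_{S^c}(|psi><psi|) |b_S> of the reduced state of
   rho = |psi><psi| on the parties in S, where the basis states a_S, b_S of the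
   parties in S are given by the restrictions to S of words a, b. *)
Definition reduced_entry (q n : nat) (psi : qvec q n) (S : {set 'I_n})
    (a b : basis_idx q n) : CC :=
  \sum_(x : basis_idx q n | [forall i, (i \in S) ==> (x i == a i)])
   \sum_(y : basis_idx q n | [forall i, (i \in S) ==> (y i == b i)]
                            && [forall i, (i \notin S) ==> (x i == y i)])
     psi x * (psi y)^*.

Definition k_uniform (q n k : nat) (psi : qvec q n) : Prop :=
  unit_vec psi /\
  forall S : {set 'I_n}, #|S| = k ->
    forall a b : basis_idx q n,
      reduced_entry psi S a b =
      (if [forall i, (i \in S) ==> (a i == b i)] then (q ^ k)%:R^-1 else 0).

Definition AME_defect (q n l : nat) (psi : qvec q n) : Prop :=
  k_uniform (n./2 - l) psi.

(* Main.v *)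
Require Import Defs.
From mathcomp Require Import all_boot all_order all_algebra.
From mathcomp Require Import complex.
From mathcomp Require Import Rstruct.
From mathcomp Require Import ring zify.
Set Implicit Arguments. Unset Strict Implicit. Unset Printing Implicit Defensive.
Import Order.TTheory GRing.Theory Num.Theory.
Local Open Scope ring_scope.

Lemma sum_sub0 (R : nmodType) (I : finType) (g : {set I} -> R) :
  \sum_(Y : {set I} | Y \subset set0) g Y = g set0.
Proof.
by rewrite (eq_bigl (fun Y => Y == set0)) ?big_pred1_eq // => Y; rewrite subset0.
Qed.

Lemma sum_subU1 (R : nmodType) (I : finType) (a : I) (U : {set I})
   (g : {set I} -> R) : a \notin U ->
  \sum_(Y : {set I} | Y \subset a |: U) g Y =
  \sum_(Y : {set I} | Y \subset U) g Y + \sum_(Y : {set I} | Y \subset U) g (a |: Y).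
Proof.
move=> aU; rewrite (bigID (fun Y : {set I} => a \in Y)) /= addrC; congr (_ + _).
  apply: eq_bigl => Y; apply/idP/idP.
    case/andP=> /subsetP sY aY; apply/subsetP=> x xY.
    have := sY x xY; rewrite !inE; case/orP=> // /eqP ex; by rewrite -ex xY in aY.
  move=> sYU; rewrite (subset_trans sYU) ?subsetU1 //=.
  by apply: contra aU => aY; apply: (subsetP sYU).
rewrite (reindex_onto (fun Y => a |: Y) (fun Y => Y :\ a)) /=; last first.
  by move=> Y /andP[_ aY]; rewrite setD1K.
apply: eq_bigl => Y; rewrite setU11 andbT.
have -> : (a |: Y) :\ a = Y :\ a by apply/setP=> x; rewrite !inE; case: eqP.
apply/idP/idP.
  case/andP=> sY /eqP eY; apply/subsetP=> x xY.
  have xa : x != a by apply: contraTneq xY => ->; rewrite -eY !inE eqxx.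
  by move: (subsetP sY x); rewrite !inE (negbTE xa) xY orbT; apply.
move=> sYU; have aY : a \notin Y by apply: contra aU => aY; apply: (subsetP sYU).
apply/andP; split; first by rewrite setUS.
by apply/eqP/setP=> x; rewrite !inE; case: eqP => // ->; rewrite (negbTE aY).
Qed.

Lemma sign_lemma (R : comRingType) (I : finType) (U : {set I}) (h : {set I} -> R) :
  \sum_(Y : {set I} | Y \subset U) \sum_(Y' : {set I} | Y' \subset U)
     (-1) ^+ (#|Y| + #|Y'|) * h (Y :|: Y') =
  \sum_(Y : {set I} | Y \subset U) (-1) ^+ #|Y| * h Y.
Proof.
move: {2}#|U| (erefl #|U|) => m; elim: m U h => [|m IH] U h.
  move/eqP; rewrite cards_eq0 => /eqP ->.
  by rewrite !sum_sub0 cards0 setU0.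
move=> cU; have [a aU] : exists a, a \in U.
  by apply/set0Pn; rewrite -cards_eq0 cU.
have aU0 : a \notin U :\ a by rewrite !inE eqxx.
have cU0 : #|U :\ a| = m by move: cU; rewrite (cardsD1 a U) aU; case.
set U0 := U :\ a in aU0 cU0 *.
have -> : U = a |: U0 by rewrite /U0 setD1K.
clearbody U0.
have cS (Y : {set I}) : Y \subset U0 -> #|a |: Y| = (#|Y|).+1.
  move=> sY; rewrite cardsU1; suff -> : a \notin Y by [].
  by apply/negP => aY; move/negP: aU0; apply; apply: (subsetP sY).
rewrite !sum_subU1 //.
rewrite (eq_bigr (fun Y : {set I} => \sum_(Y' : {set I} | Y' \subset U0) (-1) ^+ (#|Y| + #|Y'|) * h (Y :|: Y')
     - \sum_(Y' : {set I} | Y' \subset U0) (-1) ^+ (#|Y| + #|Y'|) * h (a |: (Y :|: Y')))); last first.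
  move=> Y sY; rewrite sum_subU1 // -sumrN; congr (_ + _); apply: eq_bigr => Y' sY'.
  by rewrite cS // addnS exprS mulN1r mulNr setUCA.
rewrite [X in _ + X = _](eq_bigr (fun _ => 0)); last first.
  move=> Y sY; rewrite sum_subU1 // -[X in X + _ = _]opprK -sumrN; apply/eqP; rewrite addrC subr_eq0; apply/eqP.
  apply: eq_bigr => Y' sY'; rewrite !cS // addSn addnS !exprS !mulN1r !mulNr opprK.
  by rewrite opprK; congr (_ * h _); apply/setP=> x; rewrite !inE; case: (x == a).
rewrite big1_eq addr0 sumrB (IH _ h cU0) (IH _ (fun Y => h (a |: Y)) cU0) /=.
rewrite -sumrN; congr (_ + _); apply: eq_bigr => Y sY.
by rewrite cS // exprS mulN1r mulNr.
Qed.

Lemma mobius_lemma (R : comRingType) (I : finType) (V : {set I}) (F : {set I} -> R) :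
  \sum_(U : {set I} | U \subset V) \sum_(Y : {set I} | Y \subset U)
     (-1) ^+ #|Y| * F (Y :|: ~: U) = F (~: V).
Proof.
move: {2}#|V| (erefl #|V|) => m; elim: m V F => [|m IH] V F.
  move/eqP; rewrite cards_eq0 => /eqP ->.
  by rewrite !sum_sub0 cards0 set0U expr0 mul1r.
move=> cV; have [a aV] : exists a, a \in V.
  by apply/set0Pn; rewrite -cards_eq0 cV.
have aV0 : a \notin V :\ a by rewrite !inE eqxx.
have cV0 : #|V :\ a| = m by move: cV; rewrite (cardsD1 a V) aV; case.
set V0 := V :\ a in aV0 cV0 *.
have -> : V = a |: V0 by rewrite /V0 setD1K.
clearbody V0.
rewrite sum_subU1 // -big_split /=.
have -> : ~: (a |: V0) = ~: V0 :\ a by apply/setP=> x; rewrite !inE; case: (x == a).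
rewrite -(IH _ (fun Z => F (Z :\ a)) cV0).
apply: eq_bigr => U sU.
have aU : a \notin U by apply/negP => aU; move/negP: aV0; apply; apply: (subsetP sU).
rewrite sum_subU1 //.
rewrite [X in _ + (_ + X)](eq_bigr (fun Y : {set I} => - ((-1) ^+ #|Y| * F (Y :|: ~: U)))); last first.
  move=> Y sY; have aY : a \notin Y by apply/negP => aY; move/negP: aU; apply; apply: (subsetP sY).
  rewrite cardsU1 aY exprS mulN1r mulNr.
  have -> : (a |: Y) :|: ~: (a |: U) = Y :|: ~: U.
    apply/setP=> x; rewrite !inE; case: (eqVneq x a) => [->|] /=; by rewrite ?(negbTE aU) ?(negbTE aY) ?orbT.
  by [].
rewrite sumrN addrCA subrr addr0.
apply: eq_bigr => Y sY; have aY : a \notin Y by apply/negP => aY; move/negP: aU; apply; apply: (subsetP sY).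
congr (_ * F _); apply/setP=> x; rewrite !inE; case: eqP => // ->; by rewrite (negbTE aY).
Qed.


Definition agr (q n : nat) (Z : {set 'I_n}) (x y : basis_idx q n) : bool :=
  [forall i, (i \in Z) ==> (x i == y i)].
Definition mix (q n : nat) (Z : {set 'I_n}) (x y : basis_idx q n) : basis_idx q n :=
  [ffun i => if i \in Z then x i else y i].

Lemma mixE q n (Z : {set 'I_n}) (x y : basis_idx q n) i : mix Z x y i = if i \in Z then x i else y i.
Proof. by rewrite ffunE. Qed.

Lemma agrP q n (Z : {set 'I_n}) (x y : basis_idx q n) :
  reflect (forall i, i \in Z -> x i = y i) (agr Z x y).
Proof.
apply: (iffP forallP) => [H i iZ | H i]; first by have /implyP/(_ iZ)/eqP := H i.
by apply/implyP => iZ; rewrite H.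
Qed.

Lemma card_agr q n (Z : {set 'I_n}) (d : basis_idx q n) :
  #|[pred c : basis_idx q n | agr Z c d]| = (q ^ #|~: Z|)%N.
Proof.
pose F := fun i : 'I_n => if i \in Z then pred1 (d i) else predT.
have -> : #|[pred c : basis_idx q n | agr Z c d]| = #|(family F : simpl_pred {ffun 'I_n -> 'I_q})|.
  apply: eq_card => c; rewrite !inE; apply/agrP/familyP => H i.
    by rewrite /F; case: ifP => iZ //=; rewrite inE H.
  by move=> iZ; have := H i; rewrite /F iZ inE => /eqP.
rewrite card_family foldrE big_image /=.
rewrite (bigID (fun i => i \in Z)) /= big1 ?mul1n; last by move=> i iZ; rewrite /F iZ card1.
rewrite (eq_bigr (fun _ => q)); last by move=> i iZ; rewrite /F (negbTE iZ); rewrite -[RHS](card_ord q); apply: eq_card.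
by rewrite prod_nat_const; congr (q ^ _)%N; apply: eq_card => i; rewrite !inE.
Qed.

Lemma sum_mix (R : nmodType) q n (Z : {set 'I_n}) (x : basis_idx q n) (h : basis_idx q n -> R) :
  \sum_(c : basis_idx q n) h (mix Z c x) = (\sum_(c | agr (~: Z) c x) h c) *+ (q ^ #|~: Z|).
Proof.
rewrite (partition_big (fun c => mix Z c x) (fun d => agr (~: Z) d x)) /=; last first.
  by move=> c _; apply/agrP => i; rewrite inE mixE => /negbTE ->.
rewrite -sumrMnl; apply: eq_bigr => d Hd.
rewrite (eq_bigr (fun _ => h d)); last by move=> c /eqP ->.
rewrite -(card_agr Z d) -sumr_const; apply: eq_bigl => c; rewrite !inE.
apply/eqP/agrP => [<- i iZ | H]; first by rewrite mixE iZ.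
apply/ffunP => i; rewrite mixE; case: ifP => iZ; first by rewrite H.
by move/agrP: Hd => ->; rewrite // inE iZ.
Qed.

Lemma sum_mix2 (R : nmodType) q n (B : {set 'I_n}) (h : basis_idx q n -> R) :
  \sum_(c : basis_idx q n) \sum_(d : basis_idx q n) h (mix B d c) =
  (\sum_(e : basis_idx q n) h e) *+ (q ^ n).
Proof.
pose phi (p : basis_idx q n * basis_idx q n) := (mix B p.2 p.1, mix B p.1 p.2).
have phiK : involutive phi.
  by case=> c d; rewrite /phi /=; congr pair; apply/ffunP => i; rewrite !mixE; case: (i \in B).
rewrite pair_big (reindex_inj (inv_inj phiK)) /=.
rewrite (eq_bigr (fun p => h p.1)); last first.
  by case=> c d _ /=; congr h; apply/ffunP => i; rewrite !mixE; case: (i \in B).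
rewrite -(pair_big xpredT xpredT (fun c d => h c)) /= -sumrMnl; apply: eq_bigr => c _.
by rewrite sumr_const card_ffun !card_ord.
Qed.

Lemma trip_sum (R : nmodType) (T : finType) (P : T -> T -> bool) (K : T -> T -> T -> R) :
  \sum_(x : T) \sum_(y : T) (if P x y then \sum_(c : T) K x y c else 0) =
  \sum_(p : (T * T) * T | P p.1.1 p.1.2) K p.1.1 p.1.2 p.2.
Proof.
rewrite pair_bigA [RHS]big_mkcond /= -(pair_bigA _ (fun u c => if P u.1 u.2 then K u.1 u.2 c else 0)) /=.
apply: eq_bigr => u _; case: (P u.1 u.2) => //.
by rewrite big1.
Qed.

Definition Eop q n (Z : {set 'I_n}) (g : basis_idx q n -> basis_idx q n -> CC)
   (x y : basis_idx q n) : CC :=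
  if agr Z x y then ((q ^ n)%:R)^-1 * \sum_(c : basis_idx q n) g (mix Z c x) (mix Z c y) else 0.

Definition ip q n (g h : basis_idx q n -> basis_idx q n -> CC) : CC :=
  \sum_(x : basis_idx q n) \sum_(y : basis_idx q n) (g x y)^* * h x y.

Lemma agr_mix q n (A B : {set 'I_n}) (c x y : basis_idx q n) :
  agr B (mix A c x) (mix A c y) = agr (B :\: A) x y.
Proof.
apply/agrP/agrP => H i.
  rewrite inE => /andP[iA iB]; by have := H i iB; rewrite !mixE (negbTE iA).
move=> iB; rewrite !mixE; case: ifP => // iA; apply: H; by rewrite inE iA iB.
Qed.

Lemma agrU q n (A B : {set 'I_n}) (x y : basis_idx q n) :
  agr (A :|: B) x y = agr A x y && agr (B :\: A) x y.
Proof.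
apply/agrP/andP => [H | [/agrP H1 /agrP H2] i].
  split; apply/agrP => i Hi; apply: H; move: Hi; rewrite !inE; [by move=> -> | by case/andP=> _ ->; rewrite orbT].
rewrite inE; case: (boolP (i \in A)) => iA /=; first by rewrite H1.
by move=> iB; rewrite H2 // inE iA iB.
Qed.

Lemma EE q n (A B : {set 'I_n}) g (x y : basis_idx q n) : (0 < q)%N ->
  Eop A (Eop B g) x y = Eop (A :|: B) g x y.
Proof.
move=> q0; have qn0 : ((q ^ n)%:R : CC) != 0 by rewrite pnatr_eq0 -lt0n expn_gt0 q0.
rewrite /Eop agrU; case: (agr A x y) => //=.
rewrite (eq_bigr (fun c => if agr (B :\: A) x y then ((q ^ n)%:R)^-1 *
   \sum_(d : basis_idx q n) g (mix (A :|: B) (mix B d c) x) (mix (A :|: B) (mix B d c) y) else 0)); last first.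
  move=> c _; rewrite agr_mix; case: ifP => // _; congr (_ * _); apply: eq_bigr => d _.
  by congr g; apply/ffunP => i; rewrite !mixE inE; case: (i \in B); case: (i \in A).
case: (agr (B :\: A) x y); last by rewrite big1 ?mulr0.
rewrite -mulr_sumr (sum_mix2 B (fun e => g (mix (A :|: B) e x) (mix (A :|: B) e y))).
congr (_ * _); by rewrite -(mulr_natl (\sum_e g (mix (A :|: B) e x) (mix (A :|: B) e y)) (q ^ n)) mulrA mulVf ?mul1r.
Qed.

Lemma agr_mixself q n (Z : {set 'I_n}) (c x y : basis_idx q n) : agr Z (mix Z c x) (mix Z c y).
Proof. by apply/agrP => i iZ; rewrite !mixE iZ. Qed.

Lemma Eadj q n (Z : {set 'I_n}) (g h : basis_idx q n -> basis_idx q n -> CC) :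
  ip g (Eop Z h) = ip (Eop Z g) h.
Proof.
set Qi : CC := ((q ^ n)%:R)^-1.
have cQi : Qi^* = Qi by rewrite /Qi fmorphV /= conjC_nat.
rewrite /ip.
transitivity (\sum_(x : basis_idx q n) \sum_(y : basis_idx q n) (if agr Z x y then
   \sum_(c : basis_idx q n) (Qi * ((g x y)^* * h (mix Z c x) (mix Z c y))) else 0)).
  apply: eq_bigr => x _; apply: eq_bigr => y _; rewrite /Eop; case: ifP => _; last by rewrite mulr0.
  by rewrite mulrCA mulr_sumr mulr_sumr.
symmetry.
transitivity (\sum_(x : basis_idx q n) \sum_(y : basis_idx q n) (if agr Z x y then
   \sum_(c : basis_idx q n) (Qi * ((g (mix Z c x) (mix Z c y))^* * h x y)) else 0)).
  apply: eq_bigr => x _; apply: eq_bigr => y _; rewrite /Eop; case: ifP => _; last by rewrite conjC0 mul0r.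
  rewrite rmorphM /= rmorph_sum /= fmorphV /= conjC_nat -mulrA mulr_suml mulr_sumr.
  by [].
rewrite !trip_sum.
pose tau (p : (basis_idx q n * basis_idx q n) * basis_idx q n) :=
  if agr Z p.1.1 p.1.2 then ((mix Z p.2 p.1.1, mix Z p.2 p.1.2), mix Z p.1.1 p.2) else p.
have tauK : involutive tau.
  case=> [[x y] c]; rewrite /tau /=; case: (boolP (agr Z x y)) => Hxy; last by rewrite (negbTE Hxy).
  rewrite agr_mixself /=; congr pair; [congr pair|]; apply/ffunP => i; rewrite !mixE; case iZ: (i \in Z) => //=.
  by move/agrP: Hxy => ->.
rewrite (reindex_inj (inv_inj tauK)) /=; apply: eq_big.
  case=> [[x y] c]; rewrite /tau /=; case: ifP => //= _; exact: agr_mixself.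
case=> [[x y] c] /= Hxy0; have Hxy : agr Z x y by move: Hxy0; rewrite /tau /=; case: ifP => // ->.
rewrite /tau /= Hxy /=; congr (_ * ((g _ _)^* * _)); apply/ffunP => i; rewrite !mixE; case iZ: (i \in Z) => //=.
by move/agrP: Hxy => ->.
Qed.

Lemma ip_ext q n (g g' h h' : basis_idx q n -> basis_idx q n -> CC) :
  (forall x y, g x y = g' x y) -> (forall x y, h x y = h' x y) -> ip g h = ip g' h'.
Proof. by move=> Eg Eh; apply: eq_bigr => x _; apply: eq_bigr => y _; rewrite Eg Eh. Qed.

Lemma ip_ge0 q n (g : basis_idx q n -> basis_idx q n -> CC) : 0 <= ip g g.
Proof.
by apply: sumr_ge0 => x _; apply: sumr_ge0 => y _; rewrite mulrC mul_conjC_ge0.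
Qed.

Lemma ip_sum q n (I : finType) (P : pred I) (a b : I -> CC)
    (G H : I -> basis_idx q n -> basis_idx q n -> CC) :
  ip (fun x y => \sum_(i | P i) a i * G i x y) (fun x y => \sum_(j | P j) b j * H j x y) =
  \sum_(i | P i) \sum_(j | P j) ((a i)^* * b j) * ip (G i) (H j).
Proof.
rewrite /ip.
transitivity (\sum_(x : basis_idx q n) \sum_(y : basis_idx q n) \sum_(i | P i) \sum_(j | P j)
   ((a i)^* * b j) * ((G i x y)^* * H j x y)).
  apply: eq_bigr => x _; apply: eq_bigr => y _.
  rewrite rmorph_sum /= mulr_suml; apply: eq_bigr => i _.
  rewrite mulr_sumr; apply: eq_bigr => j _.
  by rewrite rmorphM /= mulrACA.
under eq_bigr => x _ do rewrite exchange_big /=.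
rewrite exchange_big /=; apply: eq_bigr => i _.
under eq_bigr => x _ do rewrite exchange_big /=.
rewrite exchange_big /=; apply: eq_bigr => j _.
rewrite mulr_sumr; apply: eq_bigr => x _; by rewrite mulr_sumr.
Qed.


Definition vv q n (psi : qvec q n) (x y : basis_idx q n) : CC := psi x * (psi y)^*.
Definition FF q n (psi : qvec q n) (Z : {set 'I_n}) : CC := ip (vv psi) (Eop Z (vv psi)).
Definition Qv q n (psi : qvec q n) (U : {set 'I_n}) (x y : basis_idx q n) : CC :=
  \sum_(Y : {set 'I_n} | Y \subset U) (-1) ^+ #|Y| * Eop (Y :|: ~: U) (vv psi) x y.
Definition aa q n (psi : qvec q n) (U : {set 'I_n}) : CC := ip (Qv psi U) (Qv psi U).

Lemma ip_EE q n (psi : qvec q n) (A B : {set 'I_n}) : (0 < q)%N ->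
  ip (Eop A (vv psi)) (Eop B (vv psi)) = FF psi (A :|: B).
Proof.
move=> q0; rewrite -Eadj /FF; apply: ip_ext => // x y; exact: EE.
Qed.

Lemma aa_eq q n (psi : qvec q n) (U : {set 'I_n}) : (0 < q)%N ->
  aa psi U = \sum_(Y : {set 'I_n} | Y \subset U) (-1) ^+ #|Y| * FF psi (Y :|: ~: U).
Proof.
move=> q0; rewrite /aa /Qv ip_sum.
rewrite -(sign_lemma U (fun Y => FF psi (Y :|: ~: U))).
apply: eq_bigr => Y _; apply: eq_bigr => Y' _.
rewrite ip_EE // rmorphXn rmorphN1 -exprD; congr (_ * FF psi _).
by apply/setP => i; rewrite !inE; case: (i \in Y); case: (i \in Y'); case: (i \in U).
Qed.

Lemma aa_ge0 q n (psi : qvec q n) (U : {set 'I_n}) : 0 <= aa psi U.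
Proof. exact: ip_ge0. Qed.

Lemma aa_sum q n (psi : qvec q n) (V : {set 'I_n}) : (0 < q)%N ->
  \sum_(U : {set 'I_n} | U \subset V) aa psi U = FF psi (~: V).
Proof.
move=> q0; rewrite -(mobius_lemma V (FF psi)); apply: eq_bigr => U _; exact: aa_eq.
Qed.


Definition PP q n (psi : qvec q n) (V : {set 'I_n}) : CC :=
  \sum_(a : basis_idx q n) \sum_(b : basis_idx q n)
    psi a * psi b * (psi (mix V b a))^* * (psi (mix V a b))^*.

Lemma mixC q n (Z : {set 'I_n}) (x y : basis_idx q n) : mix (~: Z) x y = mix Z y x.
Proof. by apply/ffunP => i; rewrite !mixE inE; case: (i \in Z). Qed.

Lemma PP_C q n (psi : qvec q n) (V : {set 'I_n}) : PP psi (~: V) = PP psi V.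
Proof.
rewrite /PP exchange_big /=; apply: eq_bigr => a _; apply: eq_bigr => b _.
rewrite !mixC; ring.
Qed.

Lemma qn_FF q n (psi : qvec q n) (Z : {set 'I_n}) : (0 < q)%N ->
  (q ^ n)%:R * FF psi Z =
  \sum_(x : basis_idx q n) \sum_(y : basis_idx q n) (if agr Z x y then
    ((vv psi x y)^* * \sum_(x' | agr (~: Z) x' x) psi x' * (psi (mix Z x' y))^*) *+ (q ^ #|~: Z|)
   else 0).
Proof.
move=> q0; have qn0 : ((q ^ n)%:R : CC) != 0 by rewrite pnatr_eq0 -lt0n expn_gt0 q0.
rewrite /FF /ip mulr_sumr; apply: eq_bigr => x _; rewrite mulr_sumr; apply: eq_bigr => y _.
rewrite /Eop; case: ifP => _; last by rewrite !mulr0.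
rewrite mulrCA [X in _ * X]mulrA mulfV // mul1r -mulrnAr; congr (_ * _).
rewrite -(sum_mix Z x (fun x' => psi x' * (psi (mix Z x' y))^*)).
apply: eq_bigr => c _; rewrite /vv; congr (_ * (psi _)^*).
by apply/ffunP => i; rewrite !mixE; case: (i \in Z).
Qed.

Lemma FF_PP q n (psi : qvec q n) (Z : {set 'I_n}) : (0 < q)%N ->
  (q ^ n)%:R * FF psi Z = (q ^ #|~: Z|)%:R * PP psi (~: Z).
Proof.
move=> q0; rewrite qn_FF // mulr_natl.
transitivity ((\sum_(x : basis_idx q n) \sum_(y : basis_idx q n) \sum_(x' : basis_idx q n)
   (if agr Z x y && agr (~: Z) x' x then
     (vv psi x y)^* * (psi x' * (psi (mix Z x' y))^*) else 0)) *+ (q ^ #|~: Z|)).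
  rewrite -sumrMnl; apply: eq_bigr => x _; rewrite -sumrMnl; apply: eq_bigr => y _.
  case: ifP => _ /=; last by rewrite big1 // mul0rn.
  by rewrite mulr_sumr big_mkcond.
congr (_ *+ _); rewrite exchange_big /=; apply: eq_bigr => y _.
rewrite exchange_big /=; apply: eq_bigr => x' _.
rewrite -big_mkcond /= (eq_bigl (fun x => x == mix (~: Z) x' y)); last first.
  move=> x; apply/andP/eqP => [[/agrP H1 /agrP H2] | ->].
    apply/ffunP => i; rewrite mixE; case: (boolP (i \in ~: Z)) => iZ; first by rewrite H2.
    by rewrite H1 //; move: iZ; rewrite inE negbK.
  split; apply/agrP => i iZ; rewrite mixE ?iZ //.
  by rewrite inE iZ.
rewrite big_pred1_eq /vv !mixC rmorphM /= conjCK; ring.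
Qed.

Lemma re_eq q n (psi : qvec q n) (W : {set 'I_n}) (a b : basis_idx q n) :
  reduced_entry psi W a b =
  \sum_(x' | agr W x' a) psi x' * (psi (mix W b x'))^*.
Proof.
rewrite /reduced_entry; apply: eq_bigr => x _.
rewrite (eq_bigl (fun y => y == mix W b x)) ?big_pred1_eq // => y.
apply/andP/eqP => [[/forallP H1 /forallP H2] | ->].
  apply/ffunP => i; rewrite mixE; case: ifP => iW.
    by have /implyP/(_ iW)/eqP := H1 i.
  by have /implyP/(_ (negbT iW))/eqP := H2 i.
split; apply/forallP => i; apply/implyP => iW; rewrite mixE.
  by rewrite iW.
by rewrite (negbTE iW).
Qed.

Lemma FF_unif q n (psi : qvec q n) (W : {set 'I_n}) (k : nat) : (0 < q)%N ->
  unit_vec psi -> #|W| = k ->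
  (forall a b, reduced_entry psi W a b =
      (if [forall i, (i \in W) ==> (a i == b i)] then (q ^ k)%:R^-1 else 0)) ->
  (q ^ n)%:R * FF psi (~: W) = 1.
Proof.
move=> q0 uv cW Hre; rewrite qn_FF // setCK cW.
have qk0 : ((q ^ k)%:R : CC) != 0 by rewrite pnatr_eq0 -lt0n expn_gt0 q0.
transitivity (\sum_(x : basis_idx q n) \sum_(y : basis_idx q n) (if x == y then (vv psi x y)^* else 0)).
  apply: eq_bigr => x _; apply: eq_bigr => y _.
  have -> : \sum_(x' | agr W x' x) psi x' * (psi (mix (~: W) x' y))^* = reduced_entry psi W x y.
    by rewrite re_eq; apply: eq_bigr => x' _; rewrite mixC.
  rewrite Hre; have -> : [forall i, (i \in W) ==> (x i == y i)] = agr W x y by [].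
  case: (eqVneq x y) => [<- | nxy].
    have -> : agr (~: W) x x by apply/agrP.
    have -> : agr W x x by apply/agrP.
    by rewrite -mulrnAr -mulr_natr mulVf ?mulr1.
  case: ifP => // H1; case: ifP => H2; last by rewrite mulr0 mul0rn.
  exfalso; move/eqP: nxy; apply; apply/ffunP => i; case: (boolP (i \in W)) => iW.
    by move/agrP: H2 => ->.
  by move/agrP: H1 => ->; rewrite // inE.
rewrite -[RHS]conjC1 -uv rmorph_sum /=; apply: eq_bigr => x _.
rewrite big_mkcond /= (bigD1 x) //= eqxx big1 ?addr0; last by move=> y; rewrite eq_sym => /negbTE ->.
by rewrite /vv.
Qed.



Lemma sum_ge_one (R : numDomainType) (I : finType) (a : {set I} -> R) (W U : {set I}) :
  (forall U, 0 <= a U) -> U \subset W ->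
  a U <= \sum_(U' : {set I} | U' \subset W) a U'.
Proof.
move=> a0 sU; rewrite (bigD1 U) //= lerDl; exact: sumr_ge0.
Qed.

Lemma sum_ge_two (R : numDomainType) (I : finType) (a : {set I} -> R) (W U1 U2 : {set I}) :
  (forall U, 0 <= a U) -> U1 \subset W -> U2 \subset W -> U1 != U2 ->
  a U1 + a U2 <= \sum_(U' : {set I} | U' \subset W) a U'.
Proof.
move=> a0 s1 s2 n12; rewrite (bigD1 U1) //= lerD2l (bigD1 U2) /=; last by rewrite s2 eq_sym.
by rewrite lerDl; apply: sumr_ge0.
Qed.

Lemma small_sets (R : numDomainType) (I : finType) (f a : {set I} -> R) (k : nat) :
  (forall U, 0 <= a U) -> (forall V, f V = \sum_(U : {set I} | U \subset V) a U) ->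
  f set0 = 1 -> (k <= #|I|)%N -> (forall W : {set I}, #|W| = k -> f W = 1) ->
  forall W : {set I}, (#|W| <= k)%N -> f W = 1.
Proof.
move=> a0 fE f0 kI Hk W; move: {2}(k - #|W|)%N (erefl (k - #|W|)%N) => d.
elim: d W => [|d IH] W Hd cW.
  by apply: Hk; apply/eqP; rewrite eqn_leq cW /= -subn_eq0 Hd.
have [j jW] : exists j, j \notin W.
  apply/existsP; rewrite -negb_forall; apply/negP => /forallP H.
  have : W = setT by apply/setP => i; rewrite inE; exact: H.
  move=> eW; move: Hd; rewrite eW cardsT; lia.
have f1 : f (j |: W) = 1.
  apply: IH; rewrite cardsU1 jW //=; lia.
have a00 : a set0 = 1 by rewrite -f0 fE sum_sub0.
apply/le_anti/andP; split.
  rewrite -f1 !fE sum_subU1 // lerDl; exact: sumr_ge0.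
by rewrite -a00 fE; apply: sum_ge_one => //; apply: sub0set.
Qed.

Lemma final_ineq (R : numDomainType) (I : finType) (f a : {set I} -> R) (k : nat) (T : {set I}) :
  (forall U, 0 <= a U) -> (forall V, f V = \sum_(U : {set I} | U \subset V) a U) ->
  f set0 = 1 -> (forall W : {set I}, (#|W| <= k)%N -> f W = 1) -> (k < #|T|)%N ->
  \sum_(i in T) f (T :\ i) <= (#|T| - k.+1)%:R * f T + (k.+1)%:R.
Proof.
move=> a0 fE f0 Hs kT.
have a00 : a set0 = 1 by rewrite -f0 fE sum_sub0.
have van U : U != set0 -> (#|U| <= k)%N -> a U = 0.
  move=> U0 cU; apply/le_anti/andP; split; last exact: a0.
  have U0' : set0 != U by rewrite eq_sym.
  have := sum_ge_two a0 (sub0set U) (subxx U) U0'.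

  by rewrite -fE Hs // a00 -[X in _ <= X]addr0 lerD2l.
have -> : \sum_(i in T) f (T :\ i) = \sum_(U : {set I} | U \subset T) a U *+ #|T :\: U|.
  transitivity (\sum_(i in T) \sum_(U : {set I} | U \subset T) (if i \notin U then a U else 0)).
    apply: eq_bigr => i _; rewrite fE -big_mkcondr /=; apply: eq_bigl => U.
    by rewrite subsetD1.
  rewrite exchange_big /=; apply: eq_bigr => U _.
  rewrite -big_mkcondr /= -sumr_const; apply: eq_bigl => i; by rewrite !inE andbC.
rewrite fE mulr_sumr (bigD1 set0) ?sub0set //= [X in _ <= X + _](bigD1 set0) ?sub0set //=.
rewrite a00 setD0 mulr1 -addrA [X in _ <= _ + X]addrC addrA.
apply: lerD.
  by rewrite -natrD ler_nat; lia.
apply: ler_sum => U /andP[sU U0].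
case: (leqP #|U| k) => cU.
  by rewrite van // mul0rn mulr0.
rewrite -(mulr_natl (a U) #|T :\: U|) ler_wpM2r // ler_nat.
rewrite cardsD; move/setIidPr: sU => ->; lia.
Qed.


Lemma PP0 q n (psi : qvec q n) : unit_vec psi -> PP psi set0 = 1.
Proof.
move=> uv; rewrite /PP.
transitivity ((\sum_(a : basis_idx q n) psi a * (psi a)^*) * \sum_(b : basis_idx q n) psi b * (psi b)^*).
  rewrite mulr_suml; apply: eq_bigr => a _; rewrite mulr_sumr; apply: eq_bigr => b _.
  have E (x y : basis_idx q n) : mix set0 x y = y by apply/ffunP => i; rewrite mixE inE.
  rewrite !E; ring.
by rewrite uv mul1r.
Qed.

Lemma exists_set_card (I : finType) (m : nat) : (m <= #|I|)%N -> exists T : {set I}, #|T| = m.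
Proof.
elim: m => [|m IH] H; first by exists set0; rewrite cards0.
have [T cT] := IH (ltnW H).
have [j jT] : exists j, j \notin T.
  apply/existsP; rewrite -negb_forall; apply/negP => /forallP HT.
  have eT : T = setT by apply/setP => i; rewrite inE; exact: HT.
  by move: H; rewrite -cT eT cardsT ltnn.
by exists (j |: T); rewrite cardsU1 jT cT.
Qed.

Definition ff q n (psi : qvec q n) (V : {set 'I_n}) : CC := (q ^ n)%:R * FF psi (~: V).

Lemma ff_sym q n (psi : qvec q n) (V : {set 'I_n}) : (0 < q)%N ->
  ff psi V * (q ^ #|~: V|)%:R = (q ^ #|V|)%:R * ff psi (~: V).
Proof.
move=> q0; rewrite /ff !FF_PP // !setCK PP_C.
by rewrite mulrAC mulrA.
Qed.

Lemma arith_contra (q m k Q : nat) :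
  (2 <= q)%N -> (2 <= Q)%N ->
  ((m + k + 1) * Q <= m * (Q * q * q) + (k + 1))%N ->
  (2 * m * (q * q) < k + 1)%N -> False.
Proof.
move=> q2 Q2 H1 H2.
have H3 : (2 * (m * (Q * q * q)) < (k + 1) * Q)%N.
  have : (2 * m * (q * q) * Q < (k + 1) * Q)%N by rewrite ltn_pmul2r //; lia.
  have -> : (2 * m * (q * q) * Q = 2 * (m * (Q * q * q)))%N by ring.
  by [].
have H4 : (2 * k <= k * Q)%N by rewrite mulnC leq_mul2l Q2 orbT.
move: H1 H3 H4; set A := (m * (Q * q * q))%N; rewrite !mulnDl; set kQ := (k * Q)%N; set mQ := (m * Q)%N.
lia.
Qed.

Lemma arith_setup (l q n : nat) : (2 <= l)%N -> (2 <= q)%N -> ((10 * l + 4) * q ^ 2 < n)%N ->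
  let k := (n./2 - l)%N in
  [/\ (1 <= k)%N, (2 * k <= n)%N, (1 <= n - 2 * k)%N & (2 * (n - 2 * k) * (q * q) < k + 1)%N].
Proof.
move=> l2 q2 Hn k.
have Hh := odd_double_half n.
have Qs : (4 <= q * q)%N by have := leq_mul q2 q2.
have Hn2 : (10 * (l * (q * q)) + 4 * (q * q) < n)%N.
  by move: Hn; rewrite expnS expn1; have -> : ((10 * l + 4) * (q * q) = 10 * (l * (q * q)) + 4 * (q * q))%N by ring.
have lq : (4 * l <= l * (q * q))%N by rewrite mulnC leq_mul2l Qs orbT.
have Hm : (n - 2 * k <= 2 * l + 1)%N by rewrite /k; move: Hh; rewrite -!muln2; case: (odd n) => /=; lia.
have Hm2 : ((n - 2 * k) * (q * q) <= (2 * l + 1) * (q * q))%N by rewrite leq_mul2r Hm orbT.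
move: Hm2; rewrite /k; move: Hh; rewrite -!muln2; case: (odd n) => /= Hh Hm2; split; nia.
Qed.

Theorem corollary2 :
  forall l : nat, (2 <= l)%N ->
  exists c : Rdefinitions.R,
  exists q0 : nat,
  forall q : nat, (q0 <= q)%N ->
  forall n : nat, c * (q ^ 2)%:R < n%:R ->
  ~ exists psi : qvec q n, AME_defect l psi.
Proof.
move=> l l2; exists ((10 * l + 4)%:R); exists 2%N => q q2 n Hn [psi Hpsi].
have Hn' : ((10 * l + 4) * q ^ 2 < n)%N by move: Hn; rewrite -natrM ltr_nat.
have q0 : (0 < q)%N by lia.
have [k1 k2 m1 Hkm] := arith_setup l2 q2 Hn'.
move: Hpsi k1 k2 m1 Hkm; rewrite /AME_defect /k_uniform; set k := (n./2 - l)%N.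
move=> [uv Hk] k1 k2 m1 Hkm.
set m := (n - 2 * k)%N in m1 Hkm.
pose f := ff psi.
pose a := fun U : {set 'I_n} => (q ^ n)%:R * aa psi U.
have a0 : forall U, 0 <= a U by move=> U; apply: mulr_ge0; [exact: ler0n | exact: aa_ge0].
have fE : forall V, f V = \sum_(U : {set 'I_n} | U \subset V) a U.
  by move=> V; rewrite /f /ff -aa_sum // mulr_sumr.
have f0 : f set0 = 1 by rewrite /f /ff FF_PP // setCK cards0 expn0 mul1r PP0.
have fk : forall W : {set 'I_n}, #|W| = k -> f W = 1.
  by move=> W cW; apply: (FF_unif q0 uv cW); apply: Hk.
have kn : (k <= #|'I_n|)%N by rewrite card_ord; lia.
have fs := small_sets a0 fE f0 kn fk.
have [S cS] : exists S : {set 'I_n}, #|S| = k.-1 by apply: exists_set_card; rewrite card_ord; lia.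
set T := ~: S.
have cT : #|T| = (n - k.-1)%N by rewrite /T cardsCs setCK card_ord cS.
have kT : (k < #|T|)%N by rewrite cT; lia.
have fin := final_ineq a0 fE f0 fs kT.
have fTi : forall i, i \in T -> f (T :\ i) * (q ^ k)%:R = (q ^ (n - k))%:R.
  move=> i iT; have cTi : #|T :\ i| = (n - k)%N by move: (cardsD1 i T); rewrite iT cT; lia.
  have cTic : #|~: (T :\ i)| = k by rewrite cardsCs setCK card_ord cTi; lia.
  by have := ff_sym psi (T :\ i) q0; rewrite cTic cTi -/f (fs (~: (T :\ i))) ?cTic // mulr1.
have fT : f T * (q ^ k.-1)%:R = (q ^ #|T|)%:R.
  by have := ff_sym psi T q0; rewrite -/f /T setCK cS (fs S) ?cS ?leq_pred // mulr1.
have ek : k = (k.-1).+1 by lia.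
have := ler_wpM2r (ler0n _ (q ^ k)) fin.
rewrite mulr_suml (eq_bigr _ fTi) -natr_sum sum_nat_const mulrDl -mulrA.
have qk : (q ^ k)%:R = (q ^ k.-1)%:R * q%:R :> CC by rewrite -natrM -expnSr -ek.
rewrite [X in _ * (_ * X) + _]qk [f T * _]mulrA fT -!natrM -natrD ler_nat.
have e1 : (n - k.-1 = k + m + 1)%N by rewrite /m; lia.
have e2 : (n - k = k + m)%N by rewrite /m; lia.
have e3 : (k + m + 1 - k.+1 = m)%N by lia.
rewrite cT e1 e2 e3 !expnD expn1 => H.
have Q2 : (2 <= q ^ m)%N.
  apply: (leq_trans q2); rewrite -{1}(expn1 q) leq_pexp2l //.
have H1 : (q ^ k * ((m + k + 1) * q ^ m) <= q ^ k * (m * (q ^ m * q * q) + (k + 1)))%N.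
  move: H; set A := (q ^ k)%N; set B := (q ^ m)%N.
  have -> : (A * ((m + k + 1) * B) = (k + m + 1) * (A * B))%N by ring.
  have -> : (A * (m * (B * q * q) + (k + 1)) = m * (A * B * q * q) + k.+1 * A)%N by ring.
  by [].
rewrite leq_pmul2l ?expn_gt0 ?q0 // in H1.
exact: (arith_contra q2 Q2 H1 Hkm).
Qed.
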